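(* Let $(H_n)_{n\ge1}$ be symmetric positive-definite random $d\times d$ matrices with $\|H_n\|_2\le1$ a.s., $\gamma_n=Cn^{-\alpha}$ with $C>0$, $\alpha\in(\frac12,1)$, and $X_0\in\mathbb R^{d\times k}$ with $X_0^\top X_0=I_k$. Let either $X_n=R_{X_{n-1}}\big(\gamma_n(I-X_{n-1}X_{n-1}^\top)H_nX_{n-1}\big)$ for all $n$ (Riemannian SGD), or $X_n=R_{X_{n-1}}(\gamma_nH_nX_{n-1})$ for all $n$ (randomized power method). In both cases there is a constant $c>0$ such that almost surely, for all $n\ge1$, $$\big\|X_n-X_{n-1}-\gamma_n(I-X_{n-1}X_{n-1}^\top)H_nX_{n-1}\big\|_F\le c\,\gamma_n^2,$$ i.e. both updates coincide with the Oja update $X_{n-1}+\gamma_n(I-X_{n-1}X_{n-1}^\top)H_nX_{n-1}$ up to $O(\gamma_n^2)$.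
   Context: $R_X(V)=(X+V)[(X+V)^\top(X+V)]^{-1/2}$ for $X\in\mathbb R^{d\times k}$ with $X^\top X=I_k$ and $V\in\mathbb R^{d\times k}$ (the projection-like retraction on the Grassmann manifold of $k$-dimensional subspaces of $\mathbb R^d$, represented by orthonormal $d\times k$ matrices). *)

(* Defs.v *)
From HB Require Import structures.
From mathcomp Require Import all_boot all_order all_algebra.
From mathcomp Require Import all_classical all_reals all_analysis.
Set Implicit Arguments. Unset Strict Implicit. Unset Printing Implicit Defensive.
Import Order.TTheory GRing.Theory Num.Theory.
Local Open Scope ring_scope.
Local Open Scope classical_set_scope.

Section Defs.
Variable R : realType.

Definition sqnormv (n : nat) (v : 'cV[R]_n) : R := \sum_i (v i 0) ^+ 2.

Definition frob (m n : nat) (A : 'M[R]_(m, n)) : R :=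
  Num.sqrt (\sum_i \sum_j (A i j) ^+ 2).

Definition opnorm_le1 (n : nat) (A : 'M[R]_n) : Prop :=
  forall v : 'cV[R]_n, sqnormv (A *m v) <= sqnormv v.

Definition symmetric (n : nat) (A : 'M[R]_n) : Prop := A^T = A.

Definition posdef (n : nat) (A : 'M[R]_n) : Prop :=
  symmetric A /\ forall v : 'cV[R]_n, v != 0 -> 0 < (v^T *m A *m v) 0 0.

(* A^{-1/2}: the symmetric positive-definite S with S S A = I
   (it exists and is unique whenever A is positive definite). *)
Definition invsqrtmx (n : nat) (A : 'M[R]_n) : 'M[R]_n :=
  xget 0 [set S : 'M[R]_n | posdef S /\ S *m S *m A = 1%:M].

Definition retr (d k : nat) (X V : 'M[R]_(d, k)) : 'M[R]_(d, k) :=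
  (X + V) *m invsqrtmx ((X + V)^T *m (X + V)).

Definition ojadir (d k : nat) (X : 'M[R]_(d, k)) (H : 'M[R]_d) : 'M[R]_(d, k) :=
  (1%:M - X *m X^T) *m H *m X.

End Defs.

(* Main.v *)
Require Import Defs.
From HB Require Import structures.
From mathcomp Require Import all_boot all_order all_algebra.
From mathcomp Require Import all_classical all_reals all_analysis.
From mathcomp Require complex.
Import (canonicals) complex.
From mathcomp Require Import ring lra.
Import Order.TTheory GRing.Theory Num.Theory.
Local Open Scope ring_scope.
Set Implicit Arguments. Unset Strict Implicit. Unset Printing Implicit Defensive.

Ltac pos := repeat first [ assumption | apply: mulr_ge0 | apply: addr_ge0
  | apply: exprn_ge0 | apply: ler0n | apply: ler01 | (apply: ltW; assumption) ].


Section Sqrt.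
Variable R : realType.
Local Notation C := (complex.complex R).
Local Notation fC := (complex.real_complex R).

Lemma key_poly n (A : 'M[R]_n.+1) : A^T = A ->
  (forall v : 'cV_n.+1, v != 0 -> 0 < (v^T *m A *m v) 0 0) ->
  exists s : seq R, [/\ uniq s, all (fun r => 0 < r) s &
     horner_mx A (\prod_(r <- s) ('X - r%:P)) = 0].
Proof.
move=> Asym Apos.
pose AC : 'M[C]_n.+1 := map_mx fC A.
have AC_herm : AC \is hermsymmx.
  apply: realsym_hermsym.
    apply/eqP; rewrite /AC expr0 scale1r.
    apply/matrixP => i j; rewrite !mxE.
    by have /matrixP/(_ j i) := Asym; rewrite mxE => ->.
  apply/mxOverP => i j; rewrite mxE; apply/complex.complex_realP.
  by exists (A i j).
have /orthomx_spectralP eqA := hermitian_normalmx AC_herm.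
have lam_real := hermitian_spectral_diag_real AC_herm.
set P := spectralmx AC in eqA.
set lam := spectral_diag AC in eqA lam_real.
have Pu : P \in unitmx by exact: spectral_unit.
have hlam : forall j, lam 0 j = fC (complex.Re (lam 0 j)).
  move=> j; have /complex.complex_realP [r ->] := mxOverP lam_real 0 j.
  by [].
pose s := undup [seq complex.Re (lam 0 j) | j <- enum 'I_n.+1].
exists s; split.
- exact: undup_uniq.
- apply/allP => r; rewrite mem_undup => /mapP [j _ ->].
  have PA : P *m AC = diag_mx lam *m P.
    by rewrite eqA !mulmxA mulmxV // mul1mx.
  have ev : eigenvalue AC (lam 0 j).
    apply/eigenvalueP; exists (row j P).
      by rewrite -row_mul PA mul_diag_mx; apply/rowP => k; rewrite !mxE.
    apply/eqP => /(congr1 (mulmx^~ (invmx P))).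
    rewrite -row_mul mulmxV // mul0mx => /rowP /(_ j).
    by rewrite !mxE eqxx /= => /eqP; rewrite oner_eq0.
  move: ev; rewrite eigenvalue_root_char /AC -map_char_poly hlam.
  rewrite /root horner_map fmorph_eq0 -/(root _ _) -eigenvalue_root_char.
  move=> /eigenvalueP [v vA vn0].
  have := Apos v^T; rewrite trmx_eq0 trmxK vn0 => /(_ isT).
  rewrite vA -scalemxAl mxE.
  have : 0 < (v *m v^T) 0 0.
    rewrite mxE; have [i vi] : exists i, v 0 i != 0.
      apply/existsP; apply: contraNT vn0; rewrite negb_exists => /forallP h.
      by apply/eqP/rowP => i; rewrite mxE; apply/eqP; move: (h i); rewrite negbK.
    rewrite (bigD1 i) //= ltr_pwDl //.
      by rewrite mxE -expr2 lt_def sqr_ge0 sqrf_eq0 vi.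
    by apply: sumr_ge0 => l _; rewrite mxE -expr2 sqr_ge0.
  by move=> h; rewrite pmulr_lgt0.
- apply: (@map_mx_inj _ _ fC); rewrite map_mx0 map_horner_mx.
  rewrite rmorph_prod /=.
  under eq_bigr do rewrite map_polyXsubC.
  rewrite -/AC eqA horner_mx_uconjC // horner_mx_diag.
  suff -> : map_mx (horner (\prod_(i <- s) ('X - (fC i)%:P))) lam = 0.
    by rewrite linear0 mulmx0 mul0mx.
  apply/rowP => j; rewrite !mxE horner_prod.
  apply/eqP; rewrite prodf_seq_eq0; apply/hasP.
  exists (complex.Re (lam 0 j)).
    by rewrite mem_undup; apply/mapP; exists j => //; rewrite mem_enum.
  by rewrite hornerXsubC -hlam subrr eqxx.
Qed.


Lemma interp (s : seq R) (f : R -> R) :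
  exists p : {poly R}, forall r, r \in s -> p.[r] = f r.
Proof.
elim: s => [|a s [p hp]]; first by exists 0.
case: (boolP (a \in s)) => ains.
  by exists p => r; rewrite inE => /orP [/eqP -> | ]; apply: hp.
pose q := \prod_(r <- s) ('X - r%:P).
have qa : q.[a] != 0.
  rewrite horner_prod prodf_seq_eq0; apply/hasPn => r rs /=.
  by rewrite hornerXsubC subr_eq0; apply: contraNneq ains => ->.
exists (p + ((f a - p.[a]) / q.[a]) *: q) => r.
rewrite inE hornerD hornerZ => /orP [/eqP -> | rs].
  by rewrite divfK // addrC subrK.
have -> : q.[r] = 0.
  apply/eqP; rewrite horner_prod prodf_seq_eq0; apply/hasP; exists r => //.
  by rewrite /= hornerXsubC subrr eqxx.
by rewrite mulr0 addr0 hp.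
Qed.

Lemma sqn_E m (w : 'cV[R]_m) : (w^T *m w) 0 0 = \sum_i w i 0 ^+ 2.
Proof. by rewrite mxE; apply: eq_bigr => i _; rewrite mxE expr2. Qed.

Lemma sqn0_ge0 m (w : 'cV[R]_m) : 0 <= (w^T *m w) 0 0.
Proof. by rewrite sqn_E; apply: sumr_ge0 => i _; apply: sqr_ge0. Qed.

Lemma sqn0_gt0 m (w : 'cV[R]_m) : w != 0 -> 0 < (w^T *m w) 0 0.
Proof.
move=> wn0; rewrite sqn_E; have [i wi] : exists i, w i 0 != 0.
  apply/existsP; apply: contraNT wn0; rewrite negb_exists => /forallP h.
  apply/eqP/matrixP => i j; rewrite ord1 mxE; apply/eqP.
  by move: (h i); rewrite negbK.
rewrite (bigD1 i) //= ltr_pwDl //.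
  by rewrite lt_def sqr_ge0 sqrf_eq0 wi.
by apply: sumr_ge0 => l _; apply: sqr_ge0.
Qed.

Lemma horner_mx_sym n (A : 'M[R]_n.+1) (p : {poly R}) : A^T = A ->
  (horner_mx A p)^T = horner_mx A p.
Proof.
move=> Asym; elim/poly_ind: p => [|p c IH]; first by rewrite rmorph0 trmx0.
rewrite rmorphD rmorphM /= horner_mx_X horner_mx_C -mulmxE linearD /= trmx_mul.
rewrite IH Asym tr_scalar_mx; congr (_ + _).
by have := @comm_mx_horner _ _ A A p erefl.
Qed.

Lemma exists_isqrt n (A : 'M[R]_n) : posdef A ->
  exists S, posdef S /\ S *m S *m A = 1%:M.
Proof.
move=> [Asym Apos]; case: n A Asym Apos => [|n] A Asym Apos.
  exists 0; split; last by apply/matrixP => [[]].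
  split; first by apply/matrixP => [[]].
  by move=> v; rewrite (_ : v = 0) ?eqxx //; apply/matrixP => [[]].
have [s [us spos hs]] := @key_poly n A Asym Apos.
have [t ht] := interp s (fun r => (Num.sqrt (Num.sqrt r))^-1).
pose T := horner_mx A t.
have TA : T *m A = A *m T by have := @comm_mx_horner _ _ A A t erefl.
have Tsym : T^T = T by apply: horner_mx_sym.
have T4 : T ^+ 4 * A = 1.
  pose pp := t ^+ 4 * 'X - 1.
  have rts : all (root pp) s.
    apply/allP => r rs; rewrite /root /pp !hornerE (ht r rs).
    have r0 : 0 < r by have := allP spos r rs.
    set y := Num.sqrt (Num.sqrt r).
    have y4 : y ^+ 4 = r.
      by rewrite (_ : 4 = 2 * 2)%N // exprM sqr_sqrtr ?sqrtr_ge0 // sqr_sqrtr // ltW.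
    have y0 : y != 0 by rewrite /y gt_eqF // !sqrtr_gt0.
    by rewrite exprVn y4 mulVf ?subrr // gt_eqF.
  have [q hq] := uniq_roots_prod_XsubC rts (etrans (uniq_rootsE s) us).
  have : horner_mx A pp = 0 by rewrite hq rmorphM /= hs mulr0.
  rewrite /pp rmorphB rmorphM rmorphXn /= horner_mx_X rmorph1.
  by move/eqP; rewrite subr_eq0 => /eqP.
exists (T *m T); split; last first.
  transitivity (T ^+ 4 * A); last exact: T4.
  by rewrite !mulmxE (_ : 4 = 2 + 2)%N // exprD !expr2 !mulrA.
split; first by rewrite /Defs.symmetric trmx_mul Tsym.
move=> v vn0.
have -> : v^T *m (T *m T) *m v = (T *m v)^T *m (T *m v).
  by rewrite trmx_mul Tsym !mulmxA.
apply: sqn0_gt0; apply: contra_neq vn0 => Tv0.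
have : v = ((T ^+ 3 * A) *m T) *m v.
  rewrite -[LHS]mul1mx; have -> : (1%:M : 'M[R]_(n.+1)) = T ^+ 4 * A by exact: esym T4.
  by congr (_ *m v); rewrite mulmxE -[RHS]mulrA -[A * T]/(A *m T) -TA mulmxE !exprS expr0 mulr1 !mulrA.
by move=> ->; rewrite -mulmxA Tv0 mulmx0.
Qed.

End Sqrt.


Section Bounds.
Variable R : realType.

Definition mb m n (M : 'M[R]_(m, n)) (a : R) := forall i j, `|M i j| <= a.
Definition fn2 m n (M : 'M[R]_(m, n)) : R := \sum_i \sum_j M i j ^+ 2.
Definition sqn m (w : 'cV[R]_m) : R := (w^T *m w) 0 0.
Definition quad m (u : 'cV[R]_m) (M : 'M[R]_m) : R := (u^T *m M *m u) 0 0.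

Lemma mb_le m n (M : 'M[R]_(m, n)) a b : a <= b -> mb M a -> mb M b.
Proof. by move=> ab h i j; apply: le_trans (h i j) ab. Qed.

Lemma mbM m n p (A : 'M[R]_(m, n)) (B : 'M[R]_(n, p)) a b :
  mb A a -> mb B b -> mb (A *m B) (n%:R * (a * b)).
Proof.
move=> hA hB i j; rewrite mxE; apply: le_trans (ler_norm_sum _ _ _) _.
apply: le_trans (_ : \sum_(l < n) (a * b) <= _).
  by apply: ler_sum => l _; rewrite normrM ler_pM.
by rewrite sumr_const card_ord mulr_natl.
Qed.

Lemma mbD m n (A B : 'M[R]_(m, n)) a b : mb A a -> mb B b -> mb (A + B) (a + b).
Proof. by move=> hA hB i j; rewrite mxE (le_trans (ler_normD _ _)) // lerD. Qed.

Lemma mbN m n (A : 'M[R]_(m, n)) a : mb A a -> mb (- A) a.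
Proof. by move=> hA i j; rewrite mxE normrN. Qed.

Lemma mbB m n (A B : 'M[R]_(m, n)) a b : mb A a -> mb B b -> mb (A - B) (a + b).
Proof. by move=> hA hB; apply: mbD => //; apply: mbN. Qed.

Lemma mbZ m n (A : 'M[R]_(m, n)) c a : mb A a -> mb (c *: A) (`|c| * a).
Proof. by move=> hA i j; rewrite mxE normrM ler_wpM2l. Qed.

Lemma mbT m n (A : 'M[R]_(m, n)) a : mb A a -> mb A^T a.
Proof. by move=> hA i j; rewrite mxE. Qed.

Lemma mb1 n : mb (1%:M : 'M[R]_n) 1.
Proof. by move=> i j; rewrite mxE; case: (i == j); rewrite ?normr1 ?normr0. Qed.

Lemma mb_ge0 m n (A : 'M[R]_(m.+1, n.+1)) a : mb A a -> 0 <= a.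
Proof. by move=> h; apply: le_trans (h 0 0). Qed.

Lemma fn2_ge0 m n (A : 'M[R]_(m, n)) : 0 <= fn2 A.
Proof. by apply: sumr_ge0 => i _; apply: sumr_ge0 => j _; apply: sqr_ge0. Qed.

Lemma fn2_mb m n (A : 'M[R]_(m, n)) a : mb A a -> fn2 A <= (m * n)%:R * a ^+ 2.
Proof.
move=> h; apply: le_trans (_ : \sum_(i < m) \sum_(j < n) a ^+ 2 <= _).
  apply: ler_sum => i _; apply: ler_sum => j _.
  have := h i j; rewrite ler_norml => /andP [h1 h2]; nra.
rewrite !sumr_const !card_ord -mulrnA mulr_natl mulnC; exact: lexx.
Qed.

Lemma mb_fn2 m n (A : 'M[R]_(m, n)) b : 0 <= b -> fn2 A <= b ^+ 2 -> mb A b.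
Proof.
move=> b0 h i j; rewrite ler_norml.
have : A i j ^+ 2 <= fn2 A.
  rewrite /fn2 (bigD1 i) //= (bigD1 j) //= -addrA lerDl.
  apply: addr_ge0; first by apply: sumr_ge0 => l _; apply: sqr_ge0.
  by apply: sumr_ge0 => l _; apply: sumr_ge0 => l' _; apply: sqr_ge0.
move=> h2; apply/andP; split; nra.
Qed.

Lemma frob_mb m n (A : 'M[R]_(m, n)) a : 0 <= a -> mb A a ->
  frob A <= (m * n)%:R * a.
Proof.
move=> a0 h; rewrite /frob -/(fn2 A).
have mn0 : (0 : R) <= (m * n)%:R by [].
have mn1 : ((m * n)%:R : R) <= (m * n)%:R ^+ 2.
  rewrite -natrX ler_nat; case: (m * n)%N => // k.
  by rewrite expnS leq_pmulr.
rewrite -(@ger0_norm _ ((m * n)%:R * a)) ?mulr_ge0 // -sqrtr_sqr ler_sqrt ?sqr_ge0 //.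
apply: le_trans (fn2_mb h) _; rewrite exprMn ler_wpM2r ?sqr_ge0 //.
Qed.


Lemma sqnE m (w : 'cV[R]_m) : sqn w = \sum_i w i 0 ^+ 2.
Proof. by rewrite /sqn mxE; apply: eq_bigr => i _; rewrite mxE expr2. Qed.

Lemma sqn_ge0 m (w : 'cV[R]_m) : 0 <= sqn w.
Proof. by rewrite sqnE; apply: sumr_ge0 => i _; apply: sqr_ge0. Qed.

Lemma dot_sym m (x y : 'cV[R]_m) : (x^T *m y) 0 0 = (y^T *m x) 0 0.
Proof. by rewrite !mxE; apply: eq_bigr => i _; rewrite !mxE mulrC. Qed.

Lemma sqnD m (x y : 'cV[R]_m) : sqn (x + y) = sqn x + 2 * (x^T *m y) 0 0 + sqn y.
Proof.
rewrite !sqnE mxE mulr_sumr -!big_split /=; apply: eq_bigr => i _.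
by rewrite !mxE; ring.
Qed.


Lemma sqn_SS n (S A : 'M[R]_n) : A *m (S *m S) = 1%:M ->
  (forall u, 0 <= quad u (A - 1%:M)) -> forall v, sqn (S *m S *m v) <= sqn v.
Proof.
move=> ASS hD v; set u := S *m S *m v.
have -> : v = u + (A - 1%:M) *m u.
  by rewrite mulmxBl mul1mx addrC subrK /u !mulmxA -(mulmxA A) ASS mul1mx.
rewrite sqnD -addrA lerDl; apply: addr_ge0; last exact: sqn_ge0.
by apply: mulr_ge0 => //; have := hD u; rewrite /quad mulmxA.
Qed.

Lemma sqn_delta n (j : 'I_n) : sqn (delta_mx j 0 : 'cV[R]_n) = 1.
Proof.
rewrite sqnE (bigD1 j) //= big1 ?addr0; first by rewrite mxE !eqxx expr1n.
by move=> i /negPf hij; rewrite mxE hij /= expr0n.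
Qed.

Lemma mb_sqn n (M : 'M[R]_n) : (forall v, sqn (M *m v) <= sqn v) -> mb M 1.
Proof.
move=> h i j; have := h (delta_mx j 0); rewrite sqn_delta -colE sqnE.
rewrite (bigD1 i) //= !mxE => h1.
have h2 : 0 <= \sum_(l < n | l != i) col j M l 0 ^+ 2.
  by apply: sumr_ge0 => l _; apply: sqr_ge0.
rewrite ler_norml; apply/andP; split; nra.
Qed.

Lemma fn2_ES n (E S : 'M[R]_n) : (forall u, 0 <= quad u S) ->
  fn2 E <= fn2 (E *m S + E).
Proof.
move=> hS; rewrite /fn2 -subr_ge0 -sumrB; apply: sumr_ge0 => i _.
rewrite -sumrB.
have := hS (row i E)^T; rewrite /quad trmxK mxE => hq.
have eq1 : forall j, (E *m S) i j = (row i E *m S) 0 j.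
  by move=> j; rewrite -row_mul [RHS]mxE.
have -> : \sum_j ((E *m S + E) i j ^+ 2 - E i j ^+ 2) =
   \sum_j ((row i E *m S) 0 j ^+ 2) + 2 * \sum_j ((row i E *m S) 0 j * (row i E)^T j 0).
  rewrite mulr_sumr -big_split /=; apply: eq_bigr => j _.
  rewrite mxE eq1 !mxE; ring.
apply: addr_ge0; last by apply: mulr_ge0.
by apply: sumr_ge0 => j _; apply: sqr_ge0.
Qed.

End Bounds.


Section Gen.
Variable R : realType.

Lemma posdef_MtM m n (M : 'M[R]_(m, n)) :
  (forall u : 'cV_n, u != 0 -> M *m u != 0) -> posdef (M^T *m M).
Proof.
move=> hM; split; first by rewrite /Defs.symmetric trmx_mul trmxK.
move=> v vn0; have := sqn0_gt0 (hM v vn0).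
by rewrite trmx_mul !mulmxA.
Qed.

Lemma isqrt_facts n (A : 'M[R]_n) : posdef A ->
  let S := invsqrtmx A in
  [/\ S^T = S, (forall u, 0 <= quad u S), S *m S *m A = 1%:M,
      A *m (S *m S) = 1%:M & S *m A *m S = 1%:M].
Proof.
move=> hA S.
have [[Ssym Spos] SSA] : posdef S /\ S *m S *m A = 1%:M.
  exact: (xgetPex 0 (exists_isqrt hA)).
split => //.
- move=> u; have [->|un0] := eqVneq u 0.
    by rewrite /quad mulmx0 mxE.
  exact/ltW/Spos.
- exact: mulmx1C.
- by apply: mulmx1C; rewrite mulmxA.
Qed.

Lemma fn2N m n (M : 'M[R]_(m, n)) : fn2 (- M) = fn2 M.
Proof. by apply: eq_bigr => i _; apply: eq_bigr => j _; rewrite mxE sqrrN. Qed.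

Lemma mb_orth d k (X : 'M[R]_(d, k)) : X^T *m X = 1%:M -> mb X 1.
Proof.
move=> hX i j; have /matrixP /(_ j j) := hX; rewrite !mxE eqxx /= => h.
have h2 : X i j ^+ 2 <= 1.
  apply: (@le_trans _ _ (\sum_l X^T j l * X l j)); last by rewrite h.
  rewrite (bigD1 i) //= mxE -expr2 lerDl.
  by apply: sumr_ge0 => l _; rewrite mxE -expr2 sqr_ge0.
rewrite ler_norml; apply/andP; split; nra.
Qed.

Lemma mb_op n (H : 'M[R]_n) : opnorm_le1 H -> mb H 1.
Proof.
move=> hH; apply: mb_sqn => v; have := hH v.
by rewrite /sqnormv -!sqnE.
Qed.

Lemma E_bound n (S A : 'M[R]_n) :
  S^T = S -> (forall u, 0 <= quad u S) -> S *m S *m A = 1%:M ->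
  A *m (S *m S) = 1%:M -> (forall u, 0 <= quad u (A - 1%:M)) ->
  [/\ mb (S *m S) 1, (S - 1%:M) *m S + (S - 1%:M) = - (S *m S *m (A - 1%:M)) &
      fn2 (S - 1%:M) <= fn2 (S *m S *m (A - 1%:M))].
Proof.
move=> Ssym Spos SSA ASS Dpos.
have mbSS : mb (S *m S) 1 by apply: mb_sqn; exact: (sqn_SS ASS Dpos).
have eq1 : (S - 1%:M) *m S + (S - 1%:M) = - (S *m S *m (A - 1%:M)).
  rewrite mulmxBl mul1mx addrA subrK mulmxBr SSA mulmx1 opprB.
  done.
split => //; rewrite -[fn2 (S *m S *m _)]fn2N -eq1; exact: fn2_ES.
Qed.

End Gen.


Section Case1.
Variable R : realType.


Lemma quad_MtM m n (G : 'M[R]_(m, n)) (u : 'cV[R]_n) :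
  u^T *m (G^T *m G) *m u = (G *m u)^T *m (G *m u).
Proof. by rewrite trmx_mul !mulmxA. Qed.

Lemma eqle (a b : R) : a = b -> a <= b.
Proof. by move=> ->. Qed.

Lemma case1 d k (C : R) : 0 < C -> exists K : R, 0 <= K /\
  forall (X : 'M[R]_(d, k)) (H : 'M[R]_d) (g : R),
  X^T *m X = 1%:M -> mb H 1 -> 0 < g -> g <= C ->
  let Y := retr X (g *: ojadir X H) in
  Y^T *m Y = 1%:M /\ frob (Y - X - g *: ojadir X H) <= K * g ^+ 2.
Proof.
move=> C0.
pose dr : R := d%:R; pose kr : R := k%:R.
pose g0 := dr ^+ 2 * (1 + kr).
have dr0 : 0 <= dr by [].
have kr0 : 0 <= kr by [].
have g00 : 0 <= g0 by rewrite /g0 mulr_ge0 ?exprn_ge0 ?addr_ge0.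
have Cg0 : 0 <= 1 + C * g0 by apply: addr_ge0 => //; apply: mulr_ge0 => //; apply: ltW.
exists ((d * k)%:R * (kr * ((1 + C * g0) * (kr * (kr * (dr * g0 ^+ 2)))))).
split; first by pos.
move=> X H g XtX mbH g_gt0 gC Y.
set G := ojadir X H.
have mbX := mb_orth XtX.
have mbG : mb G g0.
  apply: mb_le (mbM (mbM (mbB (@mb1 _ d) (mbM mbX (mbT mbX))) mbH) mbX).
  by apply: eqle; rewrite /g0 /dr /kr; ring.
have XtG : X^T *m G = 0.
  rewrite /G /ojadir !mulmxA mulmxBr mulmx1 mulmxA XtX mul1mx subrr.
  by rewrite !mul0mx.
have GtX : G^T *m X = 0 by rewrite -[X in _ *m X]trmxK -trmx_mul XtG trmx0.
set M := X + g *: G.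
have hA : M^T *m M = 1%:M + g ^+ 2 *: (G^T *m G).
  rewrite /M [(_ + _)^T]linearD /= [(g *: G)^T]linearZ /= mulmxDl !mulmxDr XtX -!scalemxAr -!scalemxAl XtG GtX.
  by rewrite !scaler0 addr0 add0r scalerA expr2.
have Mu : forall u : 'cV_k, u != 0 -> M *m u != 0.
  move=> u un0; apply: contra_neq un0 => Mu0.
  have h : X^T *m M = 1%:M by rewrite /M mulmxDr XtX -scalemxAr XtG scaler0 addr0.
  by rewrite -[u]mul1mx -h -mulmxA Mu0 mulmx0.
have Apd : posdef (M^T *m M) := posdef_MtM Mu.
have [Ssym Spos SSA ASS SAS] := isqrt_facts Apd.
set S := invsqrtmx (M^T *m M) in Ssym Spos SSA ASS SAS.
have YE : Y = M *m S by [].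
split.
  by rewrite YE trmx_mul Ssym mulmxA -(mulmxA S) SAS.
have hD : M^T *m M - 1%:M = g ^+ 2 *: (G^T *m G) by rewrite hA addrAC subrr add0r.
have Dpos : forall u, 0 <= quad u (M^T *m M - 1%:M).
  move=> u; rewrite hD /quad -scalemxAr -scalemxAl mxE.
  rewrite quad_MtM.
  by apply: mulr_ge0; [apply: exprn_ge0; apply: ltW | apply: sqn0_ge0].
have [mbSS eqE fnE] := E_bound Ssym Spos SSA ASS Dpos.
have mbDD : mb (M^T *m M - 1%:M) (g ^+ 2 * (dr * (g0 * g0))).
  rewrite hD; have := mbZ (g ^+ 2) (mbM (mbT mbG) mbG).
  by rewrite ger0_norm ?exprn_ge0 ?ltW.
have mbSSD := mbM mbSS mbDD.
pose eb := kr * (kr * (g ^+ 2 * dr * g0 ^+ 2)).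
have eb0 : 0 <= eb by rewrite /eb; pos.
have mbE : mb (S - 1%:M) eb.
  apply: mb_fn2 => //; apply: le_trans fnE _; apply: le_trans (fn2_mb mbSSD) _.
  by apply: eqle; rewrite /eb /kr natrM; ring.
have mbM0 : mb M (1 + C * g0).
  apply: (mb_le _ (mbD mbX (mbZ g mbG))).
  rewrite lerD2l ger0_norm; [nra | exact: ltW].
have -> : Y - X - g *: G = M *m (S - 1%:M).
  by rewrite YE mulmxBr mulmx1 -addrA -opprD.
apply: le_trans (frob_mb _ (mbM mbM0 mbE)) _.
  by pos.
by apply: eqle; rewrite /eb; ring.
Qed.

End Case1.


Section Case2.
Variable R : realType.


Lemma zid n (S P Q T : 'M[R]_n) : P + Q = 1%:M ->
  S - 1%:M + (S - 1%:M) + (Q + T) = - (P - S - S + 1%:M) + T.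
Proof. by move=> h; rewrite -h; apply/matrixP => i j; rewrite !mxE; ring. Qed.

Lemma ident n (S D : 'M[R]_n) : S *m S *m (1%:M + D) = 1%:M ->
  (S - 1%:M) + (S - 1%:M) + D = - ((S - 1%:M) *m (S - 1%:M)) + S *m S *m D *m D.
Proof.
move=> h.
have hD : D = S *m S *m D + S *m S *m D *m D.
  rewrite -[LHS]mul1mx -h -mulmxA mulmxDl mul1mx mulmxDr mulmxA.
  by rewrite -(mulmxA _ D D) mulmxA.
have hE : (S - 1%:M) *m (S - 1%:M) = S *m S - S - S + 1%:M.
  rewrite mulmxBl !mulmxBr !mul1mx !mulmx1; move: (S *m S) => P.
  by apply/matrixP => i j; rewrite !mxE; ring.
have hPQ : S *m S + S *m S *m D = 1%:M by rewrite -h mulmxDr mulmx1.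
rewrite hE {1}hD; exact: zid.
Qed.

Lemma mb_half m n (Y : 'M[R]_(m, n)) a : mb (Y + Y) a -> mb Y a.
Proof.
move=> h i j; apply: le_trans (h i j); rewrite mxE -mulr2n normrMn.
by rewrite mulr2n lerDl.
Qed.


Lemma case2 d k (C : R) : 0 < C -> exists K : R, 0 <= K /\
  forall (X : 'M[R]_(d, k)) (H : 'M[R]_d) (g : R),
  X^T *m X = 1%:M -> mb H 1 -> H^T = H -> (forall v, 0 <= quad v H) ->
  0 < g -> g <= C ->
  let Y := retr X (g *: (H *m X)) in
  Y^T *m Y = 1%:M /\ frob (Y - X - g *: ojadir X H) <= K * g ^+ 2.
Proof.
move=> C0.
pose dr : R := d%:R; pose kr : R := k%:R.
have dr0 : 0 <= dr by [].
have kr0 : 0 <= kr by [].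
pose cD := dr * dr + dr * dr + C * (dr * (dr * dr)).
have cD0 : 0 <= cD by rewrite /cD; pos.
pose e1 := kr * kr * cD.
have e10 : 0 <= e1 by rewrite /e1; pos.
pose cY := kr * (e1 * e1) + dr * (dr * dr) + kr * (kr * cD * cD).
have cY0 : 0 <= cY by rewrite /cY; pos.
pose cZ := kr * ((1 + C * dr) * cY) + kr * (dr * (dr * dr)).
have cZ0 : 0 <= cZ by rewrite /cZ; pos.
exists ((d * k)%:R * cZ); split; first by pos.
move=> X H g XtX mbH Hsym Hpos g_gt0 gC Y.
have g0 : 0 <= g by apply: ltW.
have gg : g ^+ 2 <= C * g by rewrite expr2; nra.
have ng : `|g| = g by rewrite ger0_norm.
have ng2 : `|g ^+ 2| = g ^+ 2 by rewrite ger0_norm // exprn_ge0.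
have mbX := mb_orth XtX.
set U := H *m X.
have mbU : mb U dr by apply: (mb_le _ (mbM mbH mbX)); apply: eqle; rewrite /dr; ring.
set Mx := X^T *m U.
set N := U^T *m U.
have mbMx : mb Mx (dr * dr) by apply: (mb_le _ (mbM (mbT mbX) mbU)); apply: eqle; rewrite /dr; ring.
have mbNN : mb N (dr * (dr * dr)).
  by apply: (mb_le _ (mbM (mbT mbU) mbU)); apply: eqle; rewrite /dr; ring.
have UtX : U^T *m X = Mx by rewrite /U /Mx trmx_mul Hsym mulmxA.
set M := X + g *: U.
have hA : M^T *m M = 1%:M + (g *: (Mx + Mx) + g ^+ 2 *: N).
  rewrite /M [(_ + _)^T]linearD /= [(g *: U)^T]linearZ /= mulmxDl !mulmxDr XtX.
  rewrite -!scalemxAr -!scalemxAl UtX -/Mx -/N.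
  generalize Mx N; move=> P Q.
  by apply/matrixP => i j; rewrite !mxE; ring.
have qA : forall u : 'cV_k, quad u (M^T *m M - 1%:M) = sqn (M *m u) - sqn u.
  move=> u; rewrite /quad mulmxBr mulmxBl mulmx1 quad_MtM mxE.
  rewrite /sqn; move: ((M *m u)^T *m (M *m u)) (u^T *m u) => P Q; by rewrite !mxE.
have qpos : forall u : 'cV_k, sqn u <= sqn (M *m u).
  move=> u; rewrite /M mulmxDl sqnD -scalemxAl.
  have -> : sqn (X *m u) = sqn u by rewrite /sqn trmx_mul mulmxA -(mulmxA _ X^T) XtX mulmx1.
  rewrite -addrA lerDl; apply: addr_ge0; last exact: sqn_ge0.
  rewrite -scalemxAr mxE mulrA; apply: mulr_ge0; first by pos.
  by have := Hpos (X *m u); rewrite /quad /U !mulmxA trmx_mul.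
have Dpos : forall u, 0 <= quad u (M^T *m M - 1%:M) by move=> u; rewrite qA subr_ge0.
have Mu : forall u : 'cV_k, u != 0 -> M *m u != 0.
  move=> u un0; apply: contra_neq un0 => Mu0.
  have s0 : sqn (0 : 'cV[R]_d) = 0 by rewrite sqnE big1 // => i _; rewrite mxE expr0n.
  have := qpos u; rewrite Mu0 s0 => h.
  apply/eqP; apply: contraTT h => un1; rewrite -ltNge; exact: sqn0_gt0.
have Apd : posdef (M^T *m M) := posdef_MtM Mu.
have [Ssym Spos SSA ASS SAS] := isqrt_facts Apd.
set S := invsqrtmx (M^T *m M) in Ssym Spos SSA ASS SAS.
have YE : Y = M *m S by [].
split.
  by rewrite YE trmx_mul Ssym mulmxA -(mulmxA S) SAS.
have [mbSS eqE fnE] := E_bound Ssym Spos SSA ASS Dpos.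
set D := M^T *m M - 1%:M in Dpos mbSS eqE fnE.
have hD : D = g *: (Mx + Mx) + g ^+ 2 *: N by rewrite /D hA addrAC subrr add0r.
have mbDD : mb D (g * cD).
  rewrite hD; apply: (mb_le _ (mbD (mbZ g (mbD mbMx mbMx)) (mbZ (g ^+ 2) mbNN))).
  rewrite ng ng2 /cD.
  have h1 : 0 <= C - g by rewrite subr_ge0.
  have : 0 <= g * (dr * (dr * dr)) * (C - g) by pos.
  nra.
have mbSSD : mb (S *m S *m D) (kr * (1 * (g * cD))) := mbM mbSS mbDD.
have mbE : mb (S - 1%:M) (e1 * g).
  apply: mb_fn2; first by pos.
  apply: le_trans fnE _; apply: le_trans (fn2_mb mbSSD) _.
  by apply: eqle; rewrite /e1 /kr natrM; ring.
have SSA' : S *m S *m (1%:M + D) = 1%:M by rewrite /D addrC subrK.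
have hid := ident SSA'.
set Yp := S - 1%:M + g *: Mx.
have hYY : Yp + Yp = - ((S - 1%:M) *m (S - 1%:M)) + S *m S *m D *m D - g ^+ 2 *: N.
  rewrite -[RHS](addrK (g *: (Mx + Mx))) -hid hD.
  rewrite /Yp; generalize (S - 1%:M) Mx N; move=> P Q T.
  by apply/matrixP => i j; rewrite !mxE; ring.
have mbYp : mb Yp (g ^+ 2 * cY).
  apply: mb_half; rewrite hYY.
  apply: (mb_le _ (mbB (mbD (mbN (mbM mbE mbE)) (mbM mbSSD mbDD)) (mbZ (g ^+ 2) mbNN))).
  by apply: eqle; rewrite ng2 /cY /e1; ring.
have mbM0 : mb M (1 + C * dr).
  apply: (mb_le _ (mbD mbX (mbZ g mbU))).
  rewrite lerD2l ng; nra.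
have oj : ojadir X H = U - X *m Mx.
  by rewrite /ojadir mulmxBl mul1mx mulmxBl -!mulmxA.
have MMx : M *m Mx = X *m Mx + g *: (U *m Mx) by rewrite /M mulmxDl -scalemxAl.
have -> : Y - X - g *: ojadir X H = M *m Yp - g ^+ 2 *: (U *m Mx).
  rewrite YE oj /Yp mulmxDr mulmxBr mulmx1 -scalemxAr MMx.
  set MS := M *m S; generalize MS (X *m Mx) (U *m Mx); move=> P1 P3 P4.
  rewrite /M; generalize U; move=> U'.
  by apply/matrixP => i j; rewrite !mxE; ring.
apply: le_trans (frob_mb _ (mbB (mbM mbM0 mbYp) (mbZ (g ^+ 2) (mbM mbU mbMx)))) _.
  by pos.
by apply: eqle; rewrite ng2 /cZ; ring.
Qed.

End Case2.

Local Open Scope classical_set_scope.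

Theorem lemma10 (R : realType) (dm : measure_display) (Omega : measurableType dm)
  (P : probability Omega R) (d k : nat)
  (H : nat -> Omega -> 'M[R]_d) (C alpha : R)
  (X0 : 'M[R]_(d, k)) (X : nat -> Omega -> 'M[R]_(d, k)) :
  0 < C -> 1 / 2 < alpha -> alpha < 1 ->
  X0^T *m X0 = 1%:M ->
  {ae P, forall w, forall n : nat, (0 < n)%N ->
     posdef (H n w) /\ opnorm_le1 (H n w)} ->
  let gamma := fun n : nat => C * (n%:R `^ (- alpha)) in
  (forall w, X 0%N w = X0) ->
  ((forall w (n : nat), (0 < n)%N ->
      X n w = retr (X n.-1 w) (gamma n *: ojadir (X n.-1 w) (H n w)))
   \/
   (forall w (n : nat), (0 < n)%N ->
      X n w = retr (X n.-1 w) (gamma n *: (H n w *m X n.-1 w)))) ->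
  exists c : R, 0 < c /\
    {ae P, forall w, forall n : nat, (0 < n)%N ->
       frob (X n w - X n.-1 w - gamma n *: ojadir (X n.-1 w) (H n w))
         <= c * gamma n ^+ 2}.
Proof.
move=> C0 ha a1 X0o hae gamma hX0 hupd.
have [K1 [K10 h1]] := case1 d k C0.
have [K2 [K20 h2]] := case2 d k C0.
exists (K1 + K2 + 1); split.
  by rewrite ltr_pwDr ?ltr01 // addr_ge0.
have gpos : forall n : nat, (0 < n)%N -> 0 < gamma n.
  by move=> n n0; rewrite /gamma mulr_gt0 // powR_gt0 // ltr0n.
have gC : forall n : nat, (0 < n)%N -> gamma n <= C.
  move=> n n0; rewrite /gamma ler_piMr ?(ltW C0) //.
  have n1 : (1 : R) <= n%:R by rewrite ler1n.
  have h := @ler_powR _ _ n1 (- alpha) 0.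
  rewrite powRr0 in h; apply: h; rewrite oppr_le0; lra.
apply: filterS hae => w hw.
have hH : forall n : nat, (0 < n)%N -> mb (H n w) 1.
  by move=> n n0; apply: mb_op; case: (hw n n0).
have hHs : forall n : nat, (0 < n)%N -> (H n w)^T = H n w.
  by move=> n n0; case: (hw n n0) => [[]].
have hHq : forall n : nat, (0 < n)%N -> forall v, 0 <= quad v (H n w).
  move=> n n0 v; case: (hw n n0) => [[_ hp] _].
  have [->|vn0] := eqVneq v 0; first by rewrite /quad mulmx0 mxE.
  exact/ltW/hp.
have orth : forall n, (X n w)^T *m X n w = 1%:M.
  elim=> [|n IH]; first by rewrite hX0 X0o.
  case: hupd => hu; rewrite (hu w n.+1 (ltn0Sn n)) /=.
    by case: (h1 (X n w) (H n.+1 w) (gamma n.+1) IH (hH n.+1 (ltn0Sn n)) (gpos n.+1 (ltn0Sn n)) (gC n.+1 (ltn0Sn n))).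
  by case: (h2 (X n w) (H n.+1 w) (gamma n.+1) IH (hH n.+1 (ltn0Sn n)) (hHs n.+1 (ltn0Sn n)) (hHq n.+1 (ltn0Sn n))
    (gpos n.+1 (ltn0Sn n)) (gC n.+1 (ltn0Sn n))).
move=> n n0.
have g2 : 0 <= gamma n ^+ 2 by apply: exprn_ge0; apply: ltW; apply: gpos.
case: hupd => hu; rewrite [X n w](hu w n n0).
  case: (h1 (X n.-1 w) (H n w) (gamma n) (orth _) (hH _ n0) (gpos _ n0) (gC _ n0)).
  move=> _ hb; apply: le_trans hb _; rewrite ler_wpM2r //.
  by rewrite -addrA lerDl addr_ge0.
case: (h2 (X n.-1 w) (H n w) (gamma n) (orth _) (hH _ n0) (hHs _ n0) (hHq _ n0)
    (gpos _ n0) (gC _ n0)).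
move=> _ hb; apply: le_trans hb _; rewrite ler_wpM2r //.
by rewrite -addrA addrC -addrA lerDl addr_ge0.
Qed.
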